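(* Let $S$ be an additively cancellative, semisubtractive, centrally essential semiring with center $C=C(S)$. The following conditions are equivalent: (1) $S$ is a semiprime semiring; (2) $C$ is a semiprime semiring; (3) $S$ has no non-zero nilpotent elements; (4) $S$ is a commutative semiring without non-zero nilpotent elements.
   Context: A semiring is a set $S$ with two binary operations $+$ and $\cdot$ such that $(S,+)$ is a commutative monoid with neutral element $0$, $(S,\cdot)$ is a monoid with identity $1$, multiplication distributes over addition on both sides, and $0s=s0=0$ for all $s\in S$. The center is $C(S)=\{s\in S: ss'=s's \text{ for all } s'\in S\}$, a subsemiring. $S$ is centrally essential if for every non-zero $x\in S$ there exist non-zero $y,z\in C(S)$ with $xy=z$. $S$ is additively cancellative if $x+z=y+z$ implies $x=y$. $S$ is semisubtractive if for all $a\neq b$ in $S$ there exists $x\in S$ with $a+x=b$ or $b+x=a$. A semiring is semiprime if it has no non-zero nilpotent ideals. *)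

(* Defs.v *)
From mathcomp Require Import all_boot all_algebra.
Set Implicit Arguments. Unset Strict Implicit. Unset Printing Implicit Defensive.
Import GRing.Theory.
Local Open Scope ring_scope.

(* A semiring in the sense of the paper (commutative additive monoid,
   multiplicative monoid, two-sided distributivity, absorbing zero) is
   exactly MathComp's [pzSemiRingType] (0 = 1 allowed). *)

Section Semirings.
Variable S : pzSemiRingType.

Definition central (s : S) : Prop := forall s' : S, s * s' = s' * s.

Definition centrally_essential : Prop :=
  forall x : S, x != 0 ->
    exists y z : S, [/\ central y, central z, y != 0, z != 0 & x * y = z].

Definition add_cancellative : Prop :=
  forall x y z : S, x + z = y + z -> x = y.

Definition semisubtractive : Prop :=
  forall a b : S, a != b -> exists x : S, a + x = b \/ b + x = a.

Definition ideal_in (A I : S -> Prop) : Prop :=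
  [/\ forall x, I x -> A x,
      I 0,
      forall x y, I x -> I y -> I (x + y),
      forall a x, A a -> I x -> I (a * x)
    & forall a x, A a -> I x -> I (x * a)].

(* I is nilpotent: I^n = 0 for some n >= 1, i.e. every product of
   n elements of I vanishes (I^n is the set of finite sums of such products) *)
Definition nilpotent_ideal (I : S -> Prop) : Prop :=
  exists n : nat, (0 < n)%N /\
    forall f : 'I_n -> S, (forall i, I (f i)) -> \prod_(i < n) f i = 0.

Definition semiprime_in (A : S -> Prop) : Prop :=
  forall I, ideal_in A I -> nilpotent_ideal I -> forall x, I x -> x = 0.

Definition semiprime : Prop := semiprime_in (fun _ => True).

Definition center_semiprime : Prop := semiprime_in central.

Definition no_nonzero_nilpotents : Prop :=
  forall (x : S) (n : nat), x ^+ n = 0 -> x = 0.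

Definition commutative_semiring : Prop := forall x y : S, x * y = y * x.

End Semirings.

(* Main.v *)
Require Import Defs.
From mathcomp Require Import all_boot all_algebra.
Import GRing.Theory.
Local Open Scope ring_scope.

Section Aux.
Variable S : pzSemiRingType.

Lemma prod_cmul (c : S) (Hc : central c) n (f : 'I_n -> S) :
  (forall i, exists a, f i = c * a) -> exists a, \prod_(i < n) f i = c ^+ n * a.
Proof.
elim: n f => [|n IH] f Hf.
  by exists 1; rewrite big_ord0 expr0 mulr1.
have [a Ha] := IH (fun i => f (widen_ord (leqnSn n) i)) (fun i => Hf _).
have [b Hb] := Hf ord_max.
exists (a * b); rewrite big_ord_recr /= Ha Hb.
rewrite exprSr -!mulrA; congr (_ * _).
by rewrite mulrA -(Hc a) -mulrA.
Qed.

Lemma central_nil (A : S -> Prop) : A 0 -> A 1 ->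
  (forall a b, A a -> A b -> A (a + b)) ->
  (forall a b, A a -> A b -> A (a * b)) ->
  semiprime_in A -> forall c n, central c -> A c -> c ^+ n = 0 -> c = 0.
Proof.
move=> A0 A1 AD AM Hsp c n Hc Ac Hn.
case: n Hn => [|n] Hn.
  by rewrite expr0 in Hn; rewrite -(mulr1 c) Hn mulr0.
pose I := fun t => exists a, A a /\ t = c * a.
have HI : ideal_in A I.
  split.
  - by move=> x [a [Aa ->]]; apply: AM.
  - by exists 0; rewrite mulr0.
  - by move=> x y [a [Aa ->]] [b [Ab ->]]; exists (a + b); rewrite mulrDr; split => //; apply: AD.
  - move=> a x Aa [b [Ab ->]]; exists (a * b); split; first by apply: AM.
    by rewrite mulrA -Hc mulrA.
  - move=> a x Aa [b [Ab ->]]; exists (b * a); split; first by apply: AM.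
    by rewrite mulrA.
apply: (Hsp I HI); last by exists 1; rewrite mulr1.
exists n.+1; split => // f Hf.
have [a ->] := @prod_cmul c Hc _ f (fun i => let: ex_intro a (conj _ h) := Hf i in ex_intro _ a h).
by rewrite Hn mul0r.
Qed.

Lemma nil_from_central : centrally_essential S ->
  (forall (c : S) n, central c -> c ^+ n = 0 -> c = 0) -> no_nonzero_nilpotents S.
Proof.
move=> Hce Hcn x n Hx.
case: (eqVneq x 0) => // xn0.
have [y [z [Cy Cz y0 z0 Hxy]]] := Hce x xn0.
suff : z = 0 by move=> E; rewrite E eqxx in z0.
apply: (Hcn z n Cz).
by rewrite -Hxy exprMn_comm ?Hx ?mul0r // /GRing.comm Cy.
Qed.

Lemma nil_semiprime (A : S -> Prop) : no_nonzero_nilpotents S -> semiprime_in A.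
Proof.
move=> Hn I HI [n [n0 Hp]] x Ix.
apply: (Hn x n).
have := Hp (fun _ => x) (fun _ => Ix).
by rewrite prodr_const card_ord.
Qed.

Lemma nil_comm : add_cancellative S -> semisubtractive S -> centrally_essential S ->
  no_nonzero_nilpotents S -> commutative_semiring S.
Proof.
move=> Hac Hss Hce Hn.
have key : forall x s d : S, x * s + d = s * x -> d = 0.
  move=> x s d Hd.
  have dI : forall c, central c -> central (x * c) -> d * c = 0.
    move=> c Cc Cxc.
    have E : s * x * c = x * s * c.
      by rewrite -mulrA -Cxc -!mulrA (Cc s).
    apply: (Hac _ _ (x * s * c)); rewrite add0r addrC -mulrDl Hd E.
    done.
  case: (eqVneq d 0) => // dn0.
  have [y [z [Cy Cz y0 z0 Hdy]]] := Hce d dn0.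
  have zc0 : forall c, central c -> central (x * (z * c)) -> z * c = 0.
    move=> c Cc Cxzc.
    have Czc : central (z * c) by move=> t; rewrite -mulrA Cc mulrA Cz mulrA.
    have := dI _ Czc Cxzc => E.
    apply: (Hn _ 2); rewrite expr2.
    rewrite -{1}Hdy -(mulrA (d * y)) (Cc (z * c)) -mulrA (Cy (z * c * c)) !mulrA.
    by rewrite -(mulrA d z c) E !mul0r.
  case: (eqVneq (x * z) 0) => xz0.
    have C1 : central (1 : S) by move=> t; rewrite mul1r mulr1.
    have := zc0 1 C1.
    rewrite mulr1 xz0 => H.
    by rewrite H ?eqxx // in z0; move=> t; rewrite mul0r mulr0.
  have [y' [z' [Cy' Cz' _ z'0 Hxy']]] := Hce _ xz0.
  rewrite -mulrA in Hxy'.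
  have H := zc0 y' Cy' (ltac:(by rewrite Hxy')).
  by move: z'0; rewrite -Hxy' H mulr0 eqxx.
move=> x s.
case: (eqVneq (x * s) (s * x)) => // ne.
have [d [Hd|Hd]] := Hss _ _ ne.
  by have E := key _ _ _ Hd; rewrite E addr0 in Hd; rewrite Hd eqxx in ne.
by have E := key _ _ _ Hd; rewrite E addr0 in Hd; rewrite Hd eqxx in ne.
Qed.

End Aux.

Theorem proposition2p1 (S : pzSemiRingType) :
  add_cancellative S -> semisubtractive S -> centrally_essential S ->
  [/\ (semiprime S <-> center_semiprime S),
      (center_semiprime S <-> no_nonzero_nilpotents S)
    & (no_nonzero_nilpotents S <->
         commutative_semiring S /\ no_nonzero_nilpotents S)].
Proof.
move=> Hac Hss Hce.
have C0 : central (0 : S) by move=> t; rewrite mul0r mulr0.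
have C1 : central (1 : S) by move=> t; rewrite mul1r mulr1.
have CD : forall a b : S, central a -> central b -> central (a + b).
  by move=> a b Ca Cb t; rewrite mulrDl mulrDr Ca Cb.
have CM : forall a b : S, central a -> central b -> central (a * b).
  by move=> a b Ca Cb t; rewrite -mulrA Cb mulrA Ca mulrA.
have P1 : semiprime S -> no_nonzero_nilpotents S.
  move=> H; apply: (@nil_from_central S) => // c n Cc.
  exact: (@central_nil S (fun _ => True)).
have P2 : center_semiprime S -> no_nonzero_nilpotents S.
  move=> H; apply: (@nil_from_central S) => // c n Cc.
  exact: (@central_nil S (@central S)).
have Q1 : no_nonzero_nilpotents S -> semiprime S by apply: nil_semiprime.
have Q2 : no_nonzero_nilpotents S -> center_semiprime S by apply: nil_semiprime.
split; split; try tauto.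
by move=> H; split => //; apply: nil_comm.
Qed.
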